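(* In the setting of the MTL-IUS iteration below, under $L$-smoothness, $\mu$-strong convexity, bounded gradient variance and bounded second moments, and with $\eta_t\le\frac1L$, $\eta_t$ non-increasing and $\eta_t\le 2\eta_{t+1}$, the quantity $\Delta_t=\mathbb{E}\|w_t-w^*\|^2$ satisfies $$\Delta_{t+1}\le(1-\mu\eta_t)\Delta_t+\eta_t^2B,\qquad B=\frac1{N^2}\sum_{k=1}^N\sigma_k^2+2L\Gamma+G^2 .$$
   Context: $F^{(1)},\dots,F^{(N)}:\mathbb{R}^d\to\mathbb{R}$, $F=\frac1N\sum_kF^{(k)}$, minimizer $w^*$, $F^*=F(w^* )$, ${F^{(k)}}^*=\min F^{(k)}$, $\Gamma=F^*-\frac1N\sum_k{F^{(k)}}^*$. Each $F^{(k)}$ is $L$-smooth ($F^{(k)}(v)\le F^{(k)}(w)+(v-w)^T\nabla F^{(k)}(w)+\frac L2\|v-w\|^2$) and $\mu$-strongly convex ($F^{(k)}(v)\ge F^{(k)}(w)+(v-w)^T\nabla F^{(k)}(w)+\frac\mu2\|v-w\|^2$). Stochastic gradients $\nabla F^{(k)}(w_t,\xi_t^k)$ with independently drawn samples are unbiased, $\mathbb{E}\|\nabla F^{(k)}(w_t,\xi_t^k)-\nabla F^{(k)}(w_t)\|^2\le\sigma_k^2$, and $\mathbb{E}\|\nabla F^{(k)}(w_t,\xi_t^k)\|^2\le G^2$. Iteration: $v_{t+1}^k=w_t-\eta_t\nabla F^{(k)}(w_t,\xi_t^k)$, $w_{t+1}=v_{t+1}^{s_t}$ with $s_t$ uniform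 on $\{1,\dots,N\}$ and independent of all else. *)

(* Defs.v *)
From HB Require Import structures.
From mathcomp Require Import all_boot all_order all_algebra.
From mathcomp Require Import all_classical all_reals all_analysis.
Set Implicit Arguments. Unset Strict Implicit. Unset Printing Implicit Defensive.
Import Order.TTheory GRing.Theory Num.Theory.
Import numFieldNormedType.Exports.
Local Open Scope classical_set_scope.
Local Open Scope ring_scope.

Definition dotv (R : realType) (d : nat) (u v : 'rV[R]_d) : R :=
  \sum_(i < d) u ord0 i * v ord0 i.
Definition sqnorm (R : realType) (d : nat) (v : 'rV[R]_d) : R := dotv v v.

(** Borel sigma-algebra on R^d: generated by the coordinate cylinders
    {v | v_i \in A}, A Borel in R. *)
Definition coord_cyl (R : realType) (d : nat) : set (set 'rV[R]_d) :=
  fun S => exists (i : 'I_d) (A : classical_sets.set R), measurable A /\ S = [set v | A (v ord0 i)].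
Definition vecM (R : realType) (d : nat) := g_sigma_algebraType (@coord_cyl R d).

Definition meas_vec (dO : measure_display) (Om : measurableType dO) (R : realType)
  (d : nat) (X : Om -> 'rV[R]_d) : Prop :=
  measurable_fun [set: Om] (X : Om -> vecM R d).

Definition meas_oracle (R : realType) (d : nat) (dX : measure_display)
  (Xi : measurableType dX) (g : 'rV[R]_d -> Xi -> 'rV[R]_d) : Prop :=
  forall i : 'I_d, measurable_fun [set: (vecM R d * Xi)%type]
    (fun p : (vecM R d * Xi)%type => g p.1 p.2 ord0 i).

Local Open Scope ereal_scope.

Definition indep_iterate_samples (dO : measure_display) (Om : measurableType dO)
  (R : realType) (P : probability Om R) (d : nat) (X : Om -> 'rV[R]_d)
  (dX : measure_display) (Xi : measurableType dX) (N : nat) (Y : 'I_N -> Om -> Xi) : Prop :=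
  forall (A : set (vecM R d)) (B : 'I_N -> set Xi),
    measurable A -> (forall k, measurable (B k)) ->
    P ((X : Om -> vecM R d) @^-1` A `&` \bigcap_(k in [set: 'I_N]) (Y k @^-1` B k))
    = P ((X : Om -> vecM R d) @^-1` A) * \prod_(k < N) P (Y k @^-1` B k).

Definition uniform_indep_index (dO : measure_display) (Om : measurableType dO)
  (R : realType) (P : probability Om R) (d : nat) (X : Om -> 'rV[R]_d)
  (dX : measure_display) (Xi : measurableType dX) (N : nat) (Y : 'I_N -> Om -> Xi)
  (s : Om -> 'I_N) : Prop :=
  (forall k : 'I_N, measurable [set om | s om = k]) /\
  forall (A : set (vecM R d)) (B : 'I_N -> set Xi) (k : 'I_N),
    measurable A -> (forall j, measurable (B j)) ->
    P ((X : Om -> vecM R d) @^-1` A `&` \bigcap_(j in [set: 'I_N]) (Y j @^-1` B j)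
        `&` [set om | s om = k])
    = P ((X : Om -> vecM R d) @^-1` A `&` \bigcap_(j in [set: 'I_N]) (Y j @^-1` B j))
      * ((N%:R)^-1)%:E.

(* Main.v *)
Require Import Defs.
From HB Require Import structures.
From mathcomp Require Import all_boot all_order all_algebra.
From mathcomp Require Import all_classical all_reals all_analysis.
From mathcomp Require Import measurable_realfun.
From mathcomp Require Import ring lra.
Import Order.TTheory GRing.Theory Num.Theory.
Import numFieldNormedType.Exports.
Local Open Scope classical_set_scope.
Local Open Scope ring_scope.

Section vec.
Variables (R : realType) (d : nat).
Implicit Types (a b : 'rV[R]_d).

Lemma sqnorm_ge0 a : 0 <= sqnorm a.
Proof. by apply: sumr_ge0 => i _; rewrite -expr2 sqr_ge0. Qed.

Lemma sqnorm_sub_scale a b (e : R) :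
  sqnorm (a - e *: b) = sqnorm a - 2 * e * dotv a b + e ^+ 2 * sqnorm b.
Proof.
rewrite /sqnorm /dotv !mulr_sumr -sumrB -big_split /=.
by apply: eq_bigr => i _; rewrite !mxE; ring.
Qed.

Lemma dotv_sym_sub a b c : dotv (b - a) c = - dotv (a - b) c.
Proof.
rewrite /dotv -sumrN; apply: eq_bigr => i _; rewrite !mxE; ring.
Qed.

Lemma sqnorm_sym a b : sqnorm (b - a) = sqnorm (a - b).
Proof. by rewrite /sqnorm /dotv; apply: eq_bigr => i _; rewrite !mxE; ring. Qed.

Lemma abs_prod_le (x y : R) : `|x * y| <= (x ^+ 2 + y ^+ 2) / 2.
Proof.
apply/ler_normlP; split.
- have := sqr_ge0 (x + y); nra.
- have := sqr_ge0 (x - y); nra.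
Qed.

Lemma abs_dotv_le a b : `|dotv a b| <= (sqnorm a + sqnorm b) / 2.
Proof.
rewrite /sqnorm /dotv.
apply: (le_trans (ler_norm_sum _ _ _)).
rewrite -big_split /= mulr_suml; apply: ler_sum => i _.
by have := abs_prod_le (a ord0 i) (b ord0 i); rewrite !expr2.
Qed.
End vec.
Section meas.
Variables (R : realType) (d : nat) (dX : measure_display) (Xi : measurableType dX).

Lemma meas_coord (i : 'I_d) : measurable_fun [set: vecM R d] (fun v : vecM R d => v ord0 i).
Proof.
move=> _ A mA; rewrite setTI; apply: sub_sigma_algebra; exists i, A; split => //.
Qed.

Lemma meas_into_vec dO (Om : measurableType dO) (f : Om -> vecM R d) :
  (forall i, measurable_fun [set: Om] (fun om => f om ord0 i)) ->
  measurable_fun [set: Om] f.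
Proof.
move=> hf; eapply (@measurability _ _ _ (vecM R d) _ f (@coord_cyl R d)); first by [].
move=> _ [S [i [A [mA ->]]] <-].
have := hf i measurableT A mA.
by congr measurable; rewrite /preimage; apply/seteqP; split => x /=.
Qed.

Lemma meas_fst_coord (i : 'I_d) :
  measurable_fun [set: (vecM R d * Xi)%type] (fun z : (vecM R d * Xi)%type => z.1 ord0 i).
Proof. exact: (measurableT_comp (meas_coord i) measurable_fst). Qed.

Lemma meas_h (g : 'rV[R]_d -> Xi -> 'rV[R]_d) (mg : meas_oracle g) (c : 'rV[R]_d) :
  measurable_fun [set: (vecM R d * Xi)%type]
    (fun z : (vecM R d * Xi)%type => dotv (z.1 - c) (g z.1 z.2)).
Proof.
have -> : (fun z : (vecM R d * Xi)%type => dotv (z.1 - c) (g z.1 z.2)) =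
   (fun z => \sum_(i < d) (z.1 ord0 i - c ord0 i) * g z.1 z.2 ord0 i).
  by apply/funext => z; rewrite /dotv; apply: eq_bigr => i _; rewrite !mxE.
apply: measurable_sum => i; apply: measurable_funM; last exact: mg.
by apply: measurable_funB => //; exact: meas_fst_coord.
Qed.

Lemma meas_q (g : 'rV[R]_d -> Xi -> 'rV[R]_d) (mg : meas_oracle g) :
  measurable_fun [set: (vecM R d * Xi)%type]
    (fun z : (vecM R d * Xi)%type => sqnorm (g z.1 z.2)).
Proof.
apply: measurable_sum => i; apply: measurable_funM; exact: mg.
Qed.

Lemma meas_sqnorm_sub (c : 'rV[R]_d) :
  measurable_fun [set: vecM R d] (fun v : vecM R d => sqnorm (v - c)).
Proof.
have -> : (fun v : vecM R d => sqnorm (v - c)) =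
   (fun v => \sum_(i < d) (v ord0 i - c ord0 i) * (v ord0 i - c ord0 i)).
  by apply/funext => z; rewrite /sqnorm /dotv; apply: eq_bigr => i _; rewrite !mxE.
by apply: measurable_sum => i; apply: measurable_funM;
  apply: measurable_funB => //; exact: meas_coord.
Qed.
End meas.
Section pfw.
Local Open Scope ereal_scope.
Context d d' (T : measurableType d) (T' : measurableType d') (R : realType).
Variables (m : {measure set T -> \bar R}) (f : {mfun T >-> T'}).
Definition pfw := pushforward m f.
Let pfw0 : pfw set0 = 0. Proof. by rewrite /pfw /pushforward preimage_set0 measure0. Qed.
Let pfw_ge0 A : 0 <= pfw A. Proof. exact: measure_ge0. Qed.
Let pfw_sa : semi_sigma_additive pfw. Proof. exact: measure_semi_sigma_additive. Qed.
HB.instance Definition _ := isMeasure.Build _ _ _ pfw pfw0 pfw_ge0 pfw_sa.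
End pfw.
Arguments pfw {d d' T T' R}.

Lemma transfer_any {d1 d2} {X : measurableType d1} {Y : measurableType d2} {R : realType}
  (mu : {measure set X -> \bar R}) {phi : X -> Y} (mphi : measurable_fun [set: X] phi)
  {f : Y -> \bar R} (mf : measurable_fun [set: Y] f) :
  (\int[pushforward mu phi]_y f y = \int[mu]_x f (phi x))%E.
Proof.
rewrite [LHS]integralE [RHS]integralE.
rewrite (ge0_integral_pushforward mphi mu measurableT); last 2 first.
- exact: measurable_funepos.
- by move=> y _; exact: funepos_ge0.
rewrite (ge0_integral_pushforward mphi mu measurableT); last 2 first.
- exact: measurable_funeneg.
- by move=> y _; exact: funeneg_ge0.
rewrite preimage_setT.
congr (_ - _)%E.
all: apply: eq_integral => x _ /=.
- by rewrite !funeposE.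
- by rewrite !funenegE.
Qed.

Lemma transfer_ge0 {d1 d2} {X : measurableType d1} {Y : measurableType d2} {R : realType}
  (mu : {measure set X -> \bar R}) {phi : X -> Y} (mphi : measurable_fun [set: X] phi)
  {f : Y -> \bar R} (mf : measurable_fun [set: Y] f) (f0 : forall y, (0 <= f y)%E) :
  (\int[pushforward mu phi]_y f y = \int[mu]_x f (phi x))%E.
Proof. by rewrite ge0_integral_pushforward // preimage_setT. Qed.

Section freeze.
Local Open Scope ereal_scope.
Context dO (Om : measurableType dO) (R : realType) d1 d2 (T1 : measurableType d1) (T2 : measurableType d2).
Variables (m : {measure set Om -> \bar R}) (PX : probability T1 R) (PY : probability T2 R).
Variables (Z : {mfun Om >-> (T1 * T2)%type}).
Hypothesis hind : forall A B, measurable A -> measurable B ->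
  m (Z @^-1` (A `*` B)) = PX A * PY B.

Lemma pfw_prod (E : set (T1 * T2)) : measurable E -> pfw m Z E = (PX \x PY) E.
Proof.
move=> mE; symmetry; apply: product_measure_unique => // A B mA mB; exact: hind.
Qed.

Lemma freeze_ge0 (f : T1 * T2 -> \bar R) : measurable_fun setT f -> (forall z, 0 <= f z) ->
  \int[m]_x f (Z x) = \int[PX \x PY]_z f z.
Proof.
move=> mf f0; rewrite -(transfer_ge0 m (@measurable_funPT _ _ _ _ Z) mf f0) //.
apply: eq_measure_integral => E mE _ /=. rewrite -[LHS]/(pfw m Z E). by rewrite pfw_prod.
Qed.

Lemma freeze_int (f : T1 * T2 -> \bar R) : measurable_fun setT f ->
  m.-integrable setT (f \o Z) ->
  \int[m]_x f (Z x) = \int[PX]_x \int[PY]_y f (x, y) /\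
  PX.-integrable setT (fun x => \int[PY]_y f (x, y)).
Proof.
move=> mf intf.
have iprod : (PX \x PY).-integrable setT f.
  apply/integrableP; split => //.
  rewrite -(@freeze_ge0 (abse \o f)).
  - by move/integrableP : intf => [_].
  - exact: measurableT_comp.
  - by move=> z /=.
split; last exact: (integrable_fubini_F iprod).
rewrite (integral12_prod_meas1 iprod).
rewrite -(transfer_any m (@measurable_funPT _ _ _ _ Z) mf) //.
apply: eq_measure_integral => E mE _ /=. rewrite -[LHS]/(pfw m Z E). by rewrite pfw_prod.
Qed.
End freeze.
Section ge0_integral_mrestr.
Local Open Scope ereal_scope.
Context d (T : measurableType d) (R : realType).
Variables (m : {measure set T -> \bar R}) (S : set T) (mS : measurable S).
Variables (f : T -> \bar R).

Let mr := mrestr m mS.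
HB.instance Definition _ := Measure.on mr.

Let mr_indic E : measurable E ->
  \int[mr]_x (\1_E x)%:E = \int[m]_(x in S) (\1_E x)%:E.
Proof. by move=> mE; rewrite !integral_indic // /mr /mrestr setIT. Qed.

Import HBNNSimple.

Let mr_nnsfun (h : {nnsfun T >-> R}) :
  \int[mr]_x (h x)%:E = \int[m]_(x in S) (h x)%:E.
Proof.
under [LHS]eq_integral do rewrite fimfunE -fsumEFin//.
rewrite [LHS]ge0_integral_fsum//; last 2 first.
  - by move=> r; exact/measurable_EFinP/measurableT_comp.
  - by move=> n x _; rewrite EFinM nnfun_muleindic_ge0.
under [RHS]eq_integral do rewrite fimfunE -fsumEFin//.
rewrite [RHS]ge0_integral_fsum//; last 2 first.
  - by move=> r; exact/measurable_EFinP/measurableT_comp/measurable_funTS.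
  - by move=> n x _; rewrite EFinM nnfun_muleindic_ge0.
apply: eq_fsbigr => r _.
by rewrite !integralZl_indic_nnsfun//= mr_indic.
Qed.

Lemma ge0_integral_mrestr (mf : measurable_fun setT f) :
    (forall x, 0 <= f x) ->
  \int[mrestr m mS]_x f x = \int[m]_(x in S) f x.
Proof.
move=> f0; pose f_ := nnsfun_approx measurableT mf.
rewrite -/mr.
transitivity (limn (fun n => \int[mr]_x (f_ n x)%:E)).
  rewrite -monotone_convergence//=.
  - apply: eq_integral => x /[!inE] xD; apply/esym/cvg_lim => //=.
    exact: cvg_nnsfun_approx.
  - by move=> n; apply: measurableT_comp => //.
  - by move=> n x _; rewrite lee_fin.
  - by move=> x _ a b ab; rewrite lee_fin//; exact/lefP/nd_nnsfun_approx.
rewrite (_ : \int[m]_(x in S) _ =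
    limn (fun n => \int[m]_(x in S) (f_ n x)%:E)); last first.
  rewrite -monotone_convergence//=.
  - apply: eq_integral => x /[!inE] xD; apply/esym/cvg_lim => //.
    exact: cvg_nnsfun_approx.
  - by move=> n; exact/measurable_EFinP/measurable_funTS.
  - by move=> n x _; rewrite lee_fin.
  - by move=> x _ a b ab; rewrite lee_fin//; exact/lefP/nd_nnsfun_approx.
by congr (limn _); apply/funext => n /=; rewrite mr_nnsfun.
Qed.
End ge0_integral_mrestr.
Section select.
Local Open Scope ereal_scope.
Context dO (Om : measurableType dO) (R : realType) d1 d2 (T1 : measurableType d1) (T2 : measurableType d2).
Variables (P : probability Om R) (PX : probability T1 R) (PY : probability T2 R).
Variables (Z : {mfun Om >-> (T1 * T2)%type}).
Hypothesis hind : forall A B, measurable A -> measurable B ->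
  P (Z @^-1` (A `*` B)) = PX A * PY B.
Variables (S : set Om) (mS : measurable S) (N : nat).
Hypothesis N0 : (0 < N)%N.
Hypothesis hsel : forall A B, measurable A -> measurable B ->
  P (Z @^-1` (A `*` B) `&` S) = P (Z @^-1` (A `*` B)) * ((N%:R)^-1)%:E.

Lemma select_ge0 (h : T1 * T2 -> \bar R) : measurable_fun setT h -> (forall z, 0 <= h z) ->
  \int[P]_(x in S) h (Z x) = ((N%:R)^-1)%:E * \int[P]_x h (Z x).
Proof.
move=> mh h0.
have Npos : (0 < N%:R :> R)%R by rewrite ltr0n.
pose r : {nonneg R} := @NngNum R (N%:R) (ler0n R N).
pose m' := mscale r (mrestr P mS).
have hind' : forall A B, measurable A -> measurable B ->
    m' (Z @^-1` (A `*` B)) = PX A * PY B.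
  move=> A B mA mB; rewrite /m' /mscale /= /mrestr hsel // hind //.
  by rewrite muleC -muleA -EFinM mulVf ?mule1 // gt_eqF.

have e1 := @freeze_ge0 _ _ _ _ _ _ _ m' PX PY Z hind' h mh h0.
have e2 := @freeze_ge0 _ _ _ _ _ _ _ P PX PY Z hind h mh h0.
rewrite e2 -e1 /m' ge0_integral_mscale //; last first.
  exact: measurableT_comp.
rewrite (@ge0_integral_mrestr _ _ _ P S mS (fun x => h (Z x))) //; last first.
  exact: measurableT_comp.
by rewrite muleA -EFinM mulVf ?mul1e // gt_eqF.
Qed.

Lemma select_int (f : T1 * T2 -> R) : measurable_fun setT f ->
  P.-integrable setT (fun x => (f (Z x))%:E) ->
  \int[P]_x (\1_S x * f (Z x))%:E = ((N%:R)^-1)%:E * \int[P]_x (f (Z x))%:E.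
Proof.
move=> mf intf.
have -> : \int[P]_x (\1_S x * f (Z x))%:E = \int[P]_(x in S) (f (Z x))%:E.
  rewrite [RHS]integral_mkcond; apply: eq_integral => x _.
  rewrite /restrict indicE; case: ifPn => _; by rewrite ?mul1r ?mul0r.
have mEf : measurable_fun setT (EFin \o f) by exact/measurable_EFinP.
have ep : forall D, \int[P]_(x in D) (f (Z x))%:E =
    \int[P]_(x in D) ((EFin \o f)^\+ (Z x)) - \int[P]_(x in D) ((EFin \o f)^\- (Z x)).
  move=> D; rewrite [LHS]integralE; congr (_ - _); apply: eq_integral => x _.
    by rewrite !funeposE.
  by rewrite !funenegE.
have h1 := integrable_pos_fin_num measurableT intf.
have h2 := integrable_neg_fin_num measurableT intf.
have ep2 : forall D, \int[P]_(x in D) (fun x => (f (Z x))%:E)^\+ x = \int[P]_(x in D) ((EFin \o f)^\+ (Z x)).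
  by move=> D; apply: eq_integral => x _; rewrite !funeposE.
have en2 : forall D, \int[P]_(x in D) (fun x => (f (Z x))%:E)^\- x = \int[P]_(x in D) ((EFin \o f)^\- (Z x)).
  by move=> D; apply: eq_integral => x _; rewrite !funenegE.
rewrite ep2 in h1; rewrite en2 in h2.
rewrite !ep.
have mp : measurable_fun setT (EFin \o f)^\+ by exact: measurable_funepos.
have mn : measurable_fun setT (EFin \o f)^\- by exact: measurable_funeneg.
rewrite (@select_ge0 (EFin \o f)^\+ mp (fun z => funepos_ge0 _ z)).
rewrite (@select_ge0 (EFin \o f)^\- mn (fun z => funeneg_ge0 _ z)).
rewrite [in RHS]muleBr.
- by [].
- by [].
- by apply: fin_num_adde_defl; rewrite fin_numN.
Qed.
End select.
Section freeze_grad.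
Local Open Scope ereal_scope.
Context (R : realType) (d : nat) dX (Xi : measurableType dX) dO (Om : measurableType dO).
Variables (P : probability Om R) (g : 'rV[R]_d -> Xi -> 'rV[R]_d) (mg : meas_oracle g).
Variables (grad : 'rV[R]_d -> 'rV[R]_d) (c : 'rV[R]_d).
Variables (Xm : {mfun Om >-> vecM R d}) (Ym : {mfun Om >-> Xi})
  (Zm : {mfun Om >-> (vecM R d * Xi)%type}).
Hypothesis hZ : forall om, Zm om = (Xm om, Ym om).
Hypothesis hind : forall A B, measurable A -> measurable B ->
  P (Zm @^-1` (A `*` B)) = distribution P Xm A * distribution P Ym B.
Hypothesis unb : forall (x : 'rV[R]_d) (i : 'I_d),
  P.-integrable setT (fun om => (g x (Ym om) ord0 i)%:E) /\
  \int[P]_om (g x (Ym om) ord0 i)%:E = (grad x ord0 i)%:E.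
Hypothesis hint : P.-integrable setT (fun om => (dotv (Xm om - c) (g (Xm om) (Ym om)))%:E).

Lemma freeze_grad :
  \int[P]_om (dotv (Xm om - c) (g (Xm om) (Ym om)))%:E =
    \int[P]_om (dotv (Xm om - c) (grad (Xm om)))%:E /\
  P.-integrable setT (fun om => (dotv (Xm om - c) (grad (Xm om)))%:E).
Proof.
pose f := fun z : (vecM R d * Xi)%type => (dotv (z.1 - c) (g z.1 z.2))%:E.
have mf : measurable_fun setT f by apply/measurable_EFinP; exact: meas_h.
have intf : P.-integrable setT (f \o Zm).
  by rewrite /f /comp; under eq_fun do rewrite hZ /=.
have [e1 e2] := @freeze_int _ _ _ _ _ _ _ P (distribution P Xm) (distribution P Ym) Zm hind f mf intf.
have inner : forall x : vecM R d, \int[distribution P Ym]_y f (x, y) = (dotv (x - c) (grad x))%:E.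
  move=> x; rewrite /distribution.
  rewrite (transfer_any P (@measurable_funPT _ _ _ _ Ym) (measurable_fun_pair2 x mf)).
  rewrite /f /dotv /=.
  under eq_integral do rewrite -sumEFin.
  rewrite integral_sum //; last first.
    move=> i; under eq_fun do rewrite EFinM.
    exact/integrableZl/(unb x i).1.
  rewrite -sumEFin; apply: eq_bigr => i _.
  under eq_integral do rewrite EFinM.
  by rewrite integralZl ?(unb x i).1 // (unb x i).2.
have e1' : \int[P]_x f (Zm x) = \int[distribution P Xm]_x (dotv (x - c) (grad x))%:E.
  by rewrite e1; apply: eq_integral => x _; rewrite inner.
have e2' : (distribution P Xm).-integrable setT (fun x => (dotv (x - c) (grad x))%:E).
  by move: e2; under eq_fun do rewrite inner.
have mF := measurable_int _ e2'.
have tr := transfer_any P (@measurable_funPT _ _ _ _ Xm) mF.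
split.
  have -> : \int[P]_om (dotv (Xm om - c) (g (Xm om) (Ym om)))%:E = \int[P]_x f (Zm x).
    by apply: eq_integral => om _; rewrite /f hZ.
  by rewrite e1' -tr.
apply/integrableP; split; first exact: (measurableT_comp mF (@measurable_funPT _ _ _ _ Xm)).
have tr2 := transfer_ge0 P (@measurable_funPT _ _ _ _ Xm) (measurableT_comp (@abse_measurable _ _) mF)
   (fun x => abse_ge0 _).
rewrite -tr2.
by move/integrableP: e2' => [_].
Qed.
End freeze_grad.
Lemma sum_sel (R : realType) T (N : nat) (sf : T -> 'I_N) (F : 'I_N -> R) (om : T) :
  \sum_(k < N) \1_[set x | sf x = k] om * F k = F (sf om).
Proof.
rewrite (bigD1 (sf om)) //=.
rewrite indicE mem_set // mul1r.
rewrite big1 ?addr0 // => k hk.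
rewrite indicE memNset ?mul0r //= => hsk.
by move/eqP: hk; rewrite hsk.
Qed.

Local Open Scope classical_set_scope.
Local Open Scope ring_scope.

Theorem mainTheorem4
  (R : realType) (d N : nat)
  (Fk : 'I_N -> 'rV[R]_d -> R) (gradF : 'I_N -> 'rV[R]_d -> 'rV[R]_d)
  (L mu G : R) (sigma : 'I_N -> R)
  (wstar : 'rV[R]_d) (Fkstar : 'I_N -> R)
  (dO : measure_display) (Om : measurableType dO) (P : probability Om R)
  (dX : measure_display) (Xi : measurableType dX)
  (g : 'I_N -> 'rV[R]_d -> Xi -> 'rV[R]_d)
  (xi : nat -> 'I_N -> Om -> Xi) (s : nat -> Om -> 'I_N)
  (w : nat -> Om -> 'rV[R]_d) (eta : nat -> R) :
  (0 < N)%N ->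
  0 < mu -> 0 < L ->
  (* gradF k w is the gradient of F^(k) at w *)
  (forall k x v, is_derive x v (Fk k) (dotv (gradF k x) v)) ->
  (* L-smoothness *)
  (forall k v x, Fk k v <= Fk k x + dotv (v - x) (gradF k x) + L / 2 * sqnorm (v - x)) ->
  (* mu-strong convexity *)
  (forall k v x, Fk k v >= Fk k x + dotv (v - x) (gradF k x) + mu / 2 * sqnorm (v - x)) ->
  (* w* minimizes F = (1/N) sum_k F^(k) *)
  (forall v, (N%:R)^-1 * \sum_(k < N) Fk k wstar <= (N%:R)^-1 * \sum_(k < N) Fk k v) ->
  (* F^(k)* = min F^(k) *)
  (forall k, (forall v, Fkstar k <= Fk k v) /\ exists v, Fk k v = Fkstar k) ->
  (* measurability *)
  meas_vec (w 0%N) ->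
  (forall k, meas_oracle (g k)) ->
  (forall t k, measurable_fun [set: Om] (xi t k)) ->
  (* independence of the samples from the current iterate, and of s_t (uniform) from all else *)
  (forall t, indep_iterate_samples P (w t) (xi t)) ->
  (forall t, uniform_indep_index P (w t) (xi t) (s t)) ->
  (* unbiasedness of the stochastic gradients *)
  (forall t k x (i : 'I_d),
      P.-integrable [set: Om] (fun om => ((g k x (xi t k om)) ord0 i)%:E) /\
      (\int[P]_om ((g k x (xi t k om)) ord0 i)%:E = ((gradF k x) ord0 i)%:E)%E) ->
  (* bounded variance *)
  (forall t k, (\int[P]_om (sqnorm (g k (w t om) (xi t k om) - gradF k (w t om)))%:E
                 <= (sigma k ^+ 2)%:E)%E) ->
  (* bounded second moment *)
  (forall t k, (\int[P]_om (sqnorm (g k (w t om) (xi t k om)))%:E <= (G ^+ 2)%:E)%E) ->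
  (* step sizes *)
  (forall t, 0 < eta t) ->
  (forall t, eta t <= L^-1) ->
  (forall t, eta t.+1 <= eta t) ->
  (forall t, eta t <= 2 * eta t.+1) ->
  (* the MTL-IUS iteration *)
  (forall t om, w t.+1 om = w t om - eta t *: g (s t om) (w t om) (xi t (s t om) om)) ->
  let Gamma := (N%:R)^-1 * \sum_(k < N) Fk k wstar - (N%:R)^-1 * \sum_(k < N) Fkstar k in
  let B := (N%:R ^+ 2)^-1 * \sum_(k < N) sigma k ^+ 2 + 2 * L * Gamma + G ^+ 2 in
  let Delta := fun t => (\int[P]_om (sqnorm (w t om - wstar))%:E)%E in
  forall t, (Delta t < +oo)%E ->
    (Delta t.+1 <= (1 - mu * eta t)%:E * Delta t + (eta t ^+ 2 * B)%:E)%E.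
Proof.
move=> N0 mu0 L0 _ Lsm sconv wmin Fstar mw0 mg mxi hind hsel unb _ hG eta0 etaL _ _ hw.
move=> Gamma B Delta t Dt.
have mw : forall t, measurable_fun setT (w t : Om -> vecM R d).
  elim => [|n IH]; first exact: mw0.
  apply: meas_into_vec => i.
  have -> : (fun om => w n.+1 om ord0 i) = (fun om => w n om ord0 i - eta n *
      \sum_(k < N) \1_[set om | s n om = k] om * g k (w n om) (xi n k om) ord0 i).
    apply/funext => om; rewrite hw !mxE.
    by rewrite (@sum_sel R _ _ (s n) (fun k => g k (w n om) (xi n k om) ord0 i) om).
  apply: measurable_funB; first exact: (measurableT_comp (@meas_coord R d i) IH).
  apply: measurable_funM; first exact: measurable_cst.
  apply: measurable_sum => k; apply: measurable_funM.
    exact: (measurable_indic ((hsel n).1 k)).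
  exact: (measurableT_comp (mg k i) (measurable_fun_pair IH (mxi n k))).
have mS : forall k, measurable [set om | s t om = k] := (hsel t).1.
pose Xm : {mfun Om >-> vecM R d} :=
  HB.pack (w t : Om -> vecM R d) (isMeasurableFun.Build _ _ _ _ _ (mw t)).
pose Ym k : {mfun Om >-> Xi} :=
  HB.pack (xi t k) (isMeasurableFun.Build _ _ _ _ _ (mxi t k)).
pose Zm k : {mfun Om >-> (vecM R d * Xi)%type} :=
  HB.pack (fun om => ((w t om : vecM R d), xi t k om))
    (isMeasurableFun.Build _ _ _ _ _ (measurable_fun_pair (mw t) (mxi t k))).
have eZ : forall k A0 B0, Zm k @^-1` (A0 `*` B0) = (w t : Om -> vecM R d) @^-1` A0 `&`
      \bigcap_(j in [set: 'I_N]) (xi t j @^-1` (if j == k then B0 else setT)).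
  move=> k A0 B0; apply/seteqP; split => om /=.
    move=> [hA hB]; split => // j _; case: ifP => // /eqP ->; exact: hB.
  by move=> [hA hB]; split => //; have := hB k I; rewrite eqxx.
have hindk : forall k A0 B0, measurable A0 -> measurable B0 ->
    P (Zm k @^-1` (A0 `*` B0)) = (distribution P Xm A0 * distribution P (Ym k) B0)%E.
  move=> k A0 B0 mA mB.
  rewrite eZ (hind t A0 (fun j => if j == k then B0 else setT)) //; last first.
    by move=> j; case: ifP.
  congr (_ * _)%E.
  rewrite (bigD1 k) //= eqxx big1 ?mule1 //.
  by move=> j /negbTE ->; rewrite preimage_setT probability_setT.
have hselk : forall k A0 B0, measurable A0 -> measurable B0 ->
    P (Zm k @^-1` (A0 `*` B0) `&` [set om | s t om = k]) =
    (P (Zm k @^-1` (A0 `*` B0)) * ((N%:R)^-1)%:E)%E.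
  move=> k A0 B0 mA mB; rewrite !eZ.
  rewrite ((hsel t).2 A0 (fun j => if j == k then B0 else setT) k) //.
  by move=> j; case: ifP.
pose u om := sqnorm (w t om - wstar).
pose q k om := sqnorm (g k (w t om) (xi t k om)).
pose h k om := dotv (w t om - wstar) (g k (w t om) (xi t k om)).
pose e k om := dotv (w t om - wstar) (gradF k (w t om)).
pose phi k om := eta t ^+ 2 * q k om - 2 * eta t * h k om.
have mu_ : measurable_fun setT u :=
  measurableT_comp (@meas_sqnorm_sub R d wstar) (mw t).
have mq : forall k, measurable_fun setT (q k) := fun k =>
  measurableT_comp (@meas_q R d _ Xi (g k) (mg k)) (measurable_fun_pair (mw t) (mxi t k)).
have mh : forall k, measurable_fun setT (h k) := fun k =>
  measurableT_comp (@meas_h R d _ Xi (g k) (mg k) wstar) (measurable_fun_pair (mw t) (mxi t k)).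
have Iu : P.-integrable setT (fun om => (u om)%:E).
  apply/integrableP; split; first exact/measurable_EFinP.
  have -> : (fun x => `|(u x)%:E|%E) = (fun x => (u x)%:E).
    by apply/funext => x; rewrite abse_EFin ger0_norm // sqnorm_ge0.
  exact: Dt.
have Iq : forall k, P.-integrable setT (fun om => (q k om)%:E).
  move=> k; apply/integrableP; split; first exact/measurable_EFinP.
  have -> : (fun x => `|(q k x)%:E|%E) = (fun x => (q k x)%:E).
    by apply/funext => x; rewrite abse_EFin ger0_norm // sqnorm_ge0.
  exact: le_lt_trans (hG t k) (ltry _).
have Ih : forall k, P.-integrable setT (fun om => (h k om)%:E).
  move=> k; apply: (le_integrable measurableT (g := fun om => ((u om + q k om) / 2)%:E)).
  - exact/measurable_EFinP.
  - move=> om _; rewrite !abse_EFin lee_fin /h /u /q; apply: le_trans (@abs_dotv_le R d _ _) _.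
    rewrite ger0_norm //; apply: divr_ge0 => //; apply: addr_ge0; exact: sqnorm_ge0.
  -     have -> : (fun om => ((u om + q k om) / 2)%:E) =
        (fun om => (2^-1)%:E * ((u om)%:E + (q k om)%:E))%E.
      by apply/funext => om; rewrite -EFinD -EFinM mulrC.
    apply: (integrableZl measurableT); exact: (integrableD measurableT Iu (Iq k)).
have FG := fun k => @freeze_grad R d dX Xi dO Om P (g k) (mg k) (gradF k) wstar Xm (Ym k) (Zm k)
  (fun om => erefl) (hindk k) (unb t k) (Ih k).
have mphi : forall k, measurable_fun setT (phi k).
  move=> k; apply: measurable_funB.
  - apply: measurable_funM; [exact: measurable_cst | exact: mq].
  - apply: measurable_funM; [exact: measurable_cst | exact: mh].
have Iphi : forall k, P.-integrable setT (fun om => (phi k om)%:E).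
  move=> k.
  have -> : (fun om => (phi k om)%:E) =
      ((fun om => (eta t ^+ 2)%:E * (q k om)%:E) \- (fun om => (2 * eta t)%:E * (h k om)%:E))%E.
    by apply/funext => om; rewrite /phi /= EFinB !EFinM.
  apply: (integrableB measurableT); apply: (integrableZl measurableT); [exact: Iq | exact: Ih].
pose S k := [set om | s t om = k].
have IS : forall k, P.-integrable setT (fun om => (\1_(S k) om * phi k om)%:E).
  move=> k; apply: (le_integrable measurableT (g := fun om => (phi k om)%:E)).
  - apply/measurable_EFinP; apply: measurable_funM; last exact: mphi.
    exact: (measurable_indic (mS k)).
  - move=> om _; rewrite !abse_EFin lee_fin normrM indicE.
    by case: (om \in S k); rewrite ?normr1 ?normr0 ?mul1r ?mul0r.
  - exact: Iphi.
have Sel : forall k, (\int[P]_om (\1_(S k) om * phi k om)%:E =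
    ((N%:R)^-1)%:E * \int[P]_om (phi k om)%:E)%E.
  move=> k.
  pose fk := fun z : (vecM R d * Xi)%type =>
    eta t ^+ 2 * sqnorm (g k z.1 z.2) - 2 * eta t * dotv (z.1 - wstar) (g k z.1 z.2).
  have mfk : measurable_fun setT fk.
    apply: measurable_funB.
    - apply: measurable_funM; [exact: measurable_cst | exact: (@meas_q R d _ Xi (g k) (mg k))].
    - apply: measurable_funM; [exact: measurable_cst | exact: (@meas_h R d _ Xi (g k) (mg k) wstar)].
  exact: (@select_int dO Om R _ _ (vecM R d) Xi P (distribution P Xm) (distribution P (Ym k))
    (Zm k) (hindk k) (S k) (mS k) N N0 (hselk k) fk mfk (Iphi k)).
have Pt : forall om, sqnorm (w t.+1 om - wstar) =
    u om + \sum_(k < N) \1_(S k) om * phi k om.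
  move=> om; rewrite (@sum_sel R _ _ (s t) (fun k => phi k om) om) hw.
  have -> : w t om - eta t *: g (s t om) (w t om) (xi t (s t om) om) - wstar =
      (w t om - wstar) - eta t *: g (s t om) (w t om) (xi t (s t om) om).
    by rewrite addrAC.
  by rewrite sqnorm_sub_scale /u /phi /q /h; ring.
have D1 : Delta t.+1 = (\int[P]_om (u om)%:E +
    \sum_(k < N) \int[P]_om (\1_(S k) om * phi k om)%:E)%E.
  rewrite /Delta.
  have -> : (fun om => (sqnorm (w t.+1 om - wstar))%:E) =
      (fun om => (u om)%:E + \sum_(k < N) (\1_(S k) om * phi k om)%:E)%E.
    by apply/funext => om; rewrite Pt EFinD sumEFin.
  rewrite integralD //.
  - by rewrite integral_sum.
  - by apply: (integrable_sum measurableT) => k _; exact: IS.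
have FGk : forall k, (\int[P]_om (h k om)%:E = \int[P]_om (e k om)%:E)%E :=
  fun k => (FG k).1.
have Ie : forall k, P.-integrable setT (fun om => (e k om)%:E) := fun k => (FG k).2.
have Ephi : forall k, (\int[P]_om (phi k om)%:E = (eta t ^+ 2)%:E * \int[P]_om (q k om)%:E
    - (2 * eta t)%:E * \int[P]_om (e k om)%:E)%E.
  move=> k.
  have -> : (fun om => (phi k om)%:E) =
      (fun om => (eta t ^+ 2)%:E * (q k om)%:E - (2 * eta t)%:E * (h k om)%:E)%E.
    by apply/funext => om; rewrite /phi /= EFinB !EFinM.
  rewrite integralB //; last 2 first.
  - exact: (integrableZl measurableT _ (Iq k)).
  - exact: (integrableZl measurableT _ (Ih k)).
  by rewrite !integralZl // FGk.
pose U := fine (\int[P]_om (u om)%:E).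
have hU : (\int[P]_om (u om)%:E = U%:E)%E by rewrite fineK // (integrable_fin_num measurableT Iu).
pose Q k := fine (\int[P]_om (q k om)%:E).
have hQ : forall k, (\int[P]_om (q k om)%:E = (Q k)%:E)%E.
  by move=> k; rewrite fineK // (integrable_fin_num measurableT (Iq k)).
pose E k := fine (\int[P]_om (e k om)%:E).
have hE : forall k, (\int[P]_om (e k om)%:E = (E k)%:E)%E.
  by move=> k; rewrite fineK // (integrable_fin_num measurableT (Ie k)).
have DtU : Delta t = U%:E by exact: hU.
have Sk : forall k, (\int[P]_om (\1_(S k) om * phi k om)%:E)%E =
    (N%:R^-1 * (eta t ^+ 2 * Q k - 2 * eta t * E k))%:E.
  by move=> k; rewrite Sel Ephi hQ hE !EFinM EFinB !EFinM.
have hQG : forall k, Q k <= G ^+ 2.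
  by move=> k; rewrite -lee_fin -hQ; exact: hG t k.
have Npos : 0 < N%:R :> R by rewrite ltr0n.
have Ninv : 0 <= N%:R^-1 :> R by rewrite invr_ge0 ltW.
have key : forall x : 'rV[R]_d,
    mu / 2 * sqnorm (x - wstar) <= N%:R^-1 * \sum_(k < N) dotv (x - wstar) (gradF k x).
  move=> x.
  have hk : forall k, Fk k x - Fk k wstar + mu / 2 * sqnorm (x - wstar) <=
      dotv (x - wstar) (gradF k x).
    by move=> k; have := sconv k wstar x; rewrite dotv_sym_sub sqnorm_sym => H; lra.
  have Hs : \sum_(k < N) (Fk k x - Fk k wstar + mu / 2 * sqnorm (x - wstar)) <=
      \sum_(k < N) dotv (x - wstar) (gradF k x).
    by apply: ler_sum => k _; exact: hk k.
  rewrite big_split sumrB /= sumr_const card_ord in Hs.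
  have Hw := wmin x.
  have Hs' := ler_wpM2l Ninv Hs.
  rewrite !mulrDr mulrN in Hs'.
  have eN : N%:R^-1 * ((mu / 2 * sqnorm (x - wstar)) *+ N) = mu / 2 * sqnorm (x - wstar).
    by rewrite -[(mu / 2 * sqnorm (x - wstar)) *+ N]mulr_natl -!mulrA mulKf // gt_eqF.
  rewrite eN in Hs'; lra.
have hEU : mu / 2 * U <= N%:R^-1 * \sum_(k < N) E k.
  have I1 : P.-integrable setT (fun om => ((mu / 2) * u om)%:E).
    by under eq_fun do rewrite EFinM; exact: (integrableZl measurableT _ Iu).
  have I2 : P.-integrable setT (fun om => (N%:R^-1 * \sum_(k < N) e k om)%:E).
    under eq_fun do rewrite EFinM -sumEFin.
    apply: (integrableZl measurableT); apply: (integrable_sum measurableT) => k _.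
    exact: Ie.
  have := le_integral measurableT I1 I2.
  have -> : (\int[P]_om ((mu / 2) * u om)%:E = ((mu / 2) * U)%:E)%E.
    by under eq_integral do rewrite EFinM; rewrite integralZl // hU -EFinM.
  have -> : (\int[P]_om (N%:R^-1 * \sum_(k < N) e k om)%:E =
      (N%:R^-1 * \sum_(k < N) E k)%:E)%E.
    under eq_integral do rewrite EFinM -sumEFin.
    rewrite integralZl //; last first.
      by apply: (integrable_sum measurableT) => k _; exact: Ie.
    rewrite integral_sum //.
    under eq_bigr => k _ do rewrite hE.
    by rewrite sumEFin -EFinM.
  rewrite lee_fin; apply => om _; rewrite lee_fin; exact: key.
have hB : G ^+ 2 <= B.
  rewrite /B /Gamma.
  have s1 : 0 <= \sum_(k < N) sigma k ^+ 2 by apply: sumr_ge0 => k _; exact: sqr_ge0.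
  have s2 : N%:R^-1 * \sum_(k < N) Fkstar k <= N%:R^-1 * \sum_(k < N) Fk k wstar.
    apply: ler_wpM2l; first exact: Ninv.
    by apply: ler_sum => k _; exact: (Fstar k).1.
  have s3 : 0 <= N%:R ^- 2 * \sum_(k < N) sigma k ^+ 2.
    by apply: mulr_ge0 => //; rewrite invr_ge0 exprn_ge0 // ltW.
  have s4 : 0 <= 2 * L * (N%:R^-1 * \sum_(k < N) Fk k wstar - N%:R^-1 * \sum_(k < N) Fkstar k).
    by apply: mulr_ge0; [apply: mulr_ge0 => //; exact: ltW | rewrite subr_ge0].
  lra.
have hSQ : N%:R^-1 * \sum_(k < N) Q k <= G ^+ 2.
  have : \sum_(k < N) Q k <= \sum_(k < N) G ^+ 2 by apply: ler_sum => k _; exact: hQG.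
  rewrite sumr_const card_ord => H.
  have := ler_wpM2l Ninv H.
  by rewrite -[G ^+ 2 *+ N]mulr_natl mulKf // gt_eqF.
rewrite D1 DtU hU (eq_bigr _ (fun k _ => Sk k)) sumEFin -EFinM -!EFinD lee_fin.
have -> : \sum_(k < N) N%:R^-1 * (eta t ^+ 2 * Q k - 2 * eta t * E k) =
    eta t ^+ 2 * (N%:R^-1 * \sum_(k < N) Q k) - 2 * eta t * (N%:R^-1 * \sum_(k < N) E k).
  rewrite -mulr_sumr sumrB -!mulr_sumr; ring.
have et := eta0 t.
have h1 : eta t ^+ 2 * (N%:R^-1 * \sum_(k < N) Q k) <= eta t ^+ 2 * B.
  by apply: ler_wpM2l; [exact: sqr_ge0 | exact: le_trans hSQ hB].
have h2 : 2 * eta t * (mu / 2 * U) <= 2 * eta t * (N%:R^-1 * \sum_(k < N) E k).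
  by apply: ler_wpM2l => //; apply: mulr_ge0 => //; exact: ltW.
lra.
Qed.
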